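(* Let $A$ be a compatible real alternative $^*$-algebra. Then: (1) the norm function $n$ takes values in the nucleus of $A$; (2) for all $x,y\in A$, $(x,x^c,y)=0$. As a consequence, the $^*$-subalgebra generated by any two elements $x,y\in A$ is associative.
   Context: A real alternative $^*$-algebra is a real vector space $A$ with a bilinear product and a unit $1$ (with $\mathbb{R}$ identified with $\mathbb{R}1$) such that the associator $(x,y,z)=(xy)z-x(yz)$ is an alternating function, equipped with a $^*$-involution $x\mapsto x^c$, i.e. a real linear map with $(x^c)^c=x$, $(xy)^c=y^cx^c$ and $r^c=r$ for $r\in\mathbb{R}$. The trace is $t(x)=x+x^c$ and the norm is $n(x)=xx^c$. The nucleus of $A$ is $\{r\in A:(r,x,y)=0\ \forall x,y\in A\}$. $A$ is called compatible if $t$ takes values in the nucleus of $A$. *)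

(* Defs.v *)
From HB Require Import structures.
From mathcomp Require Import all_boot all_order all_algebra.
From mathcomp Require Export reals.
Set Implicit Arguments. Unset Strict Implicit. Unset Printing Implicit Defensive.
Import Order.TTheory GRing.Theory Num.Theory.
Local Open Scope ring_scope.

Section AltStar.
Variables (R : realType) (V : lmodType R).
Variables (mul : V -> V -> V) (one : V) (conj : V -> V).

Definition assoc (x y z : V) : V := mul (mul x y) z - mul x (mul y z).

Definition tr (x : V) : V := x + conj x.
Definition nrm (x : V) : V := mul x (conj x).

Definition nucleus (r : V) : Prop := forall x y, assoc r x y = 0.

Record is_real_alt_star_alg : Prop := {
  mul_linl : forall (a : R) x y z, mul (a *: x + y) z = a *: mul x z + mul y z;
  mul_linr : forall (a : R) x y z, mul z (a *: x + y) = a *: mul z x + mul z y;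
  mul1x : forall x, mul one x = x;
  mulx1 : forall x, mul x one = x;
  one_neq0 : one != 0;                    (* R is identified with R1 *)
  assoc_alt12 : forall x y, assoc x x y = 0;
  assoc_alt23 : forall x y, assoc y x x = 0;
  assoc_alt13 : forall x y, assoc x y x = 0;
  conj_lin : forall (a : R) x y, conj (a *: x + y) = a *: conj x + conj y;
  conjK : forall x, conj (conj x) = x;
  conjM : forall x y, conj (mul x y) = mul (conj y) (conj x);
  conj_real : forall r : R, conj (r *: one) = r *: one
}.

Definition compatible : Prop := forall x, nucleus (tr x).

Inductive gen_star_subalg (x y : V) : V -> Prop :=
  | gs_one : gen_star_subalg x y one
  | gs_x : gen_star_subalg x y x
  | gs_y : gen_star_subalg x y y
  | gs_add : forall u v, gen_star_subalg x y u -> gen_star_subalg x y v ->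
      gen_star_subalg x y (u + v)
  | gs_scale : forall (a : R) u, gen_star_subalg x y u -> gen_star_subalg x y (a *: u)
  | gs_mul : forall u v, gen_star_subalg x y u -> gen_star_subalg x y v ->
      gen_star_subalg x y (mul u v)
  | gs_conj : forall u, gen_star_subalg x y u -> gen_star_subalg x y (conj u).

End AltStar.

(* Main.v *)
Require Import Defs.
From HB Require Import structures.
From mathcomp Require Import all_boot all_order all_algebra reals.
From mathcomp Require Import zify.
Import GRing.Theory Num.Theory.
Local Open Scope ring_scope.

Lemma cyc4 (U : zmodType) (X Y Z W : U) :
  X - Y + Z = 0 -> Y - Z + W = 0 -> Z - W + X = 0 -> W - X + Y = 0 -> X + X + X = 0.
Proof.
move=> /eqP; rewrite addrAC subr_eq0 => /eqP <-.
rewrite addrK addrC => /eqP; rewrite addr_eq0 => /eqP ->.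
rewrite opprK => h3.
rewrite addrA (addrAC (W + W)) addrK addrC => /eqP; rewrite addr_eq0 => /eqP Ze.
by rewrite Ze in h3.
Qed.

Lemma zid (U : zmodType) (P1 P2 P3 P4 P5 : U) :
  P1 - P2 - (P3 - P4) + (P2 - P5) = (P4 - P5) + (P1 - P3).
Proof.
rewrite opprB (addrC (P4 - P5)) -!addrA; congr (_ + _).
rewrite (addrCA P4) (addrCA P4) (addrCA (-P3) P2) addKr. done.
Qed.

Section Alt.
Set Implicit Arguments. Unset Strict Implicit.
Variables (R : realType) (V : lmodType R).
Variables (mul : V -> V -> V) (one : V) (conj : V -> V).
Hypothesis HA : is_real_alt_star_alg mul one conj.

Local Notation a3 := (assoc mul).

Lemma mul0l z : mul 0 z = 0.
Proof.
have := mul_linl HA 1 0 0 z; rewrite !scale1r addr0 => h.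
by apply/eqP; rewrite -(addrI (mul 0 z) (etrans (addr0 _) h)).
Qed.
Lemma mul0r z : mul z 0 = 0.
Proof.
have := mul_linr HA 1 0 0 z; rewrite !scale1r addr0 => h.
by apply/eqP; rewrite -(addrI (mul z 0) (etrans (addr0 _) h)).
Qed.
Lemma mulDl x y z : mul (x + y) z = mul x z + mul y z.
Proof. by have := mul_linl HA 1 x y z; rewrite !scale1r. Qed.
Lemma mulDr x y z : mul z (x + y) = mul z x + mul z y.
Proof. by have := mul_linr HA 1 x y z; rewrite !scale1r. Qed.
Lemma mulZl a x z : mul (a *: x) z = a *: mul x z.
Proof. by have := mul_linl HA a x 0 z; rewrite !addr0 mul0l addr0. Qed.
Lemma mulZr a x z : mul z (a *: x) = a *: mul z x.
Proof. by have := mul_linr HA a x 0 z; rewrite !addr0 mul0r addr0. Qed.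
Lemma mulNl x z : mul (- x) z = - mul x z.
Proof. by rewrite -scaleN1r mulZl scaleN1r. Qed.
Lemma mulNr x z : mul z (- x) = - mul z x.
Proof. by rewrite -scaleN1r mulZr scaleN1r. Qed.
Lemma mulBl x y z : mul (x - y) z = mul x z - mul y z.
Proof. by rewrite mulDl mulNl. Qed.
Lemma mulBr x y z : mul z (x - y) = mul z x - mul z y.
Proof. by rewrite mulDr mulNr. Qed.

Lemma a3Dl u v y z : a3 (u + v) y z = a3 u y z + a3 v y z.
Proof. rewrite /assoc mulDl mulDl mulDl opprD. by rewrite addrACA. Qed.
Lemma a3Dm u v y z : a3 y (u + v) z = a3 y u z + a3 y v z.
Proof. rewrite /assoc mulDr mulDl mulDl mulDr opprD. by rewrite addrACA. Qed.
Lemma a3Dr u v y z : a3 y z (u + v) = a3 y z u + a3 y z v.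
Proof. rewrite /assoc mulDr mulDr mulDr opprD. by rewrite addrACA. Qed.
Lemma a3Zl a u y z : a3 (a *: u) y z = a *: a3 u y z.
Proof. by rewrite /assoc !mulZl scalerBr. Qed.
Lemma a3Zm a u y z : a3 y (a *: u) z = a *: a3 y u z.
Proof. by rewrite /assoc !mulZr !mulZl mulZr scalerBr. Qed.
Lemma a3Zr a u y z : a3 y z (a *: u) = a *: a3 y z u.
Proof. by rewrite /assoc !mulZr scalerBr. Qed.

Lemma skew12 x y z : a3 x y z = - a3 y x z.
Proof.
have := assoc_alt12 HA (x + y) z.
rewrite a3Dl !a3Dm !(assoc_alt12 HA) add0r addr0 => /eqP.
by rewrite addr_eq0 => /eqP.
Qed.
Lemma skew23 x y z : a3 x y z = - a3 x z y.
Proof.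
have := assoc_alt23 HA (y + z) x.
rewrite a3Dm !a3Dr !(assoc_alt23 HA) add0r addr0 => /eqP.
by rewrite addr_eq0 => /eqP.
Qed.
Lemma cyc x y z : a3 x y z = a3 y z x.
Proof. by rewrite skew12 skew23 opprK. Qed.

Lemma teich a b c d :
  a3 (mul a b) c d - a3 a (mul b c) d + a3 a b (mul c d)
  = mul a (a3 b c d) + mul (a3 a b c) d.
Proof. by rewrite /assoc mulBr mulBl zid. Qed.

Lemma nmul_eq0 (w : V) n : (0 < n)%N -> w *+ n = 0 -> w = 0.
Proof.
move=> n0 h.
have nz : (n%:R : R) != 0 by rewrite pnatr_eq0 -lt0n.
by rewrite -[w]scale1r -(mulVf nz) -scalerA scaler_nat h scaler0.
Qed.

Lemma half0 (w : V) : w + w = 0 -> w = 0.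
Proof. by move=> h; apply: (@nmul_eq0 w 2) => //; rewrite mulr2n. Qed.
Lemma third0 (w : V) : w + w + w = 0 -> w = 0.
Proof. by move=> h; apply: (@nmul_eq0 w 3) => //; rewrite !mulrS mulr0n addr0 addrA. Qed.

Lemma nuc_m r u v : nucleus mul r -> a3 u r v = 0.
Proof. by move=> h; rewrite skew12 h oppr0. Qed.
Lemma nuc_r r u v : nucleus mul r -> a3 u v r = 0.
Proof. by move=> h; rewrite -cyc h. Qed.
Lemma nuc_one : nucleus mul one.
Proof. by move=> u v; rewrite /assoc !(mul1x HA) subrr. Qed.
Lemma nuc_half u : nucleus mul (u + u) -> nucleus mul u.
Proof. by move=> h a b; apply: half0; rewrite -a3Dl h. Qed.

Lemma conjE u : conj u = tr conj u - u.
Proof. by rewrite /tr addrC addKr. Qed.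

Lemma a3Bm u v y z : a3 y (u - v) z = a3 y u z - a3 y v z.
Proof. by rewrite a3Dm -scaleN1r a3Zm scaleN1r. Qed.

Lemma part1 (Hc : compatible mul conj) x : nucleus mul (nrm mul conj x).
Proof.
apply: nuc_half; have := Hc (nrm mul conj x).
by rewrite /tr {2}/nrm (conjM HA) (conjK HA).
Qed.

Lemma part2 (Hc : compatible mul conj) x y : a3 x (conj x) y = 0.
Proof. by rewrite conjE a3Bm (assoc_alt12 HA) subr0 nuc_m. Qed.


Inductive mono (x y : V) : nat -> V -> Prop :=
| mo_x : mono x y 1 x
| mo_y : mono x y 1 y
| mo_n t : nucleus mul t -> mono x y 1 t
| mo_mul i j u v : mono x y i u -> mono x y j v -> mono x y (i + j) (mul u v).

Lemma mono_pos x y i u : mono x y i u -> (0 < i)%N.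
Proof. by elim=> // i' j u' v _ h _ _; rewrite addn_gt0 h. Qed.

Lemma tel a b c d : a3 b c d = 0 -> a3 a b c = 0 ->
  a3 (mul a b) c d - a3 (mul b c) d a + a3 (mul c d) a b = 0.
Proof.
move=> h1 h2; have := teich a b c d; rewrite h1 h2 mul0r mul0l addr0 => <-.
by rewrite -(cyc a (mul b c) d) -(cyc b (mul c d) a) -(cyc a b (mul c d)).
Qed.

Lemma gl x y n
  (IH : forall i j k p q r, mono x y i p -> mono x y j q -> mono x y k r ->
        (i + j + k <= n)%N -> a3 p q r = 0)
  ia ib ic id a b c d : mono x y ia a -> mono x y ib b -> mono x y ic c ->
  mono x y id d -> (ia + ib + ic + id <= n.+1)%N -> a3 (mul a b) c d = 0.
Proof.
move=> ha hb hc hd hn.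
have pa := mono_pos ha; have pb := mono_pos hb.
have pc := mono_pos hc; have pd := mono_pos hd.
have habc : a3 a b c = 0 by apply: (IH _ _ _ _ _ _ ha hb hc); lia.
have hbcd : a3 b c d = 0 by apply: (IH _ _ _ _ _ _ hb hc hd); lia.
have hcda : a3 c d a = 0 by apply: (IH _ _ _ _ _ _ hc hd ha); lia.
have hdab : a3 d a b = 0 by apply: (IH _ _ _ _ _ _ hd ha hb); lia.
apply: third0; exact: (cyc4 _ _ _ _ _ (tel hbcd habc) (tel hcda hbcd) (tel hdab hcda) (tel habc hdab)).
Qed.

Lemma base x y p q r :
  (p = x \/ p = y \/ nucleus mul p) -> (q = x \/ q = y \/ nucleus mul q) ->
  (r = x \/ r = y \/ nucleus mul r) -> a3 p q r = 0.
Proof.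
move=> [->|[->|hp]]; last by move=> _ _; apply: hp.
- move=> [->|[->|hq]]; last by move=> _; apply: nuc_m.
  + by move=> _; apply: (assoc_alt12 HA).
  + move=> [->|[->|hr]]; last by apply: nuc_r.
    * by apply: (assoc_alt13 HA).
    * by apply: (assoc_alt23 HA).
- move=> [->|[->|hq]]; last by move=> _; apply: nuc_m.
  + move=> [->|[->|hr]]; last by apply: nuc_r.
    * by apply: (assoc_alt23 HA).
    * by apply: (assoc_alt13 HA).
  + by move=> _; apply: (assoc_alt12 HA).
Qed.

Lemma mono_assoc x y n : forall i j k p q r, mono x y i p -> mono x y j q ->
  mono x y k r -> (i + j + k <= n)%N -> a3 p q r = 0.
Proof.
elim: n => [|n IH] i j k p q r hp hq hr hn.
  by have := mono_pos hp; lia.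
have [le|gt] := leqP (i + j + k) n; first exact: IH hp hq hr le.
case: hp hn => [||t ht|i1 i2 a b ha hb] hn; last first.
  by apply: (gl IH ha hb hq hr); lia.
all: case: hq hn => [||t' ht'|j1 j2 a b ha hb] hn;
  try (by rewrite cyc; apply: (gl IH ha hb hr); [constructor; assumption | lia]).
all: case: hr hn => [||t'' ht''|k1 k2 a b ha hb] hn;
  try (by rewrite cyc cyc; apply: (gl IH ha hb); [constructor; assumption | constructor; assumption | lia]).
all: by apply: (base (x:=x) (y:=y)); auto.
Qed.


Inductive spn (x y : V) : V -> Prop :=
| sp_m n u : mono x y n u -> spn x y u
| sp_add u v : spn x y u -> spn x y v -> spn x y (u + v)
| sp_sc (a : R) u : spn x y u -> spn x y (a *: u).

Lemma spn_mul x y u v : spn x y u -> spn x y v -> spn x y (mul u v).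
Proof.
move=> hu; elim: hu v => [n u' hm|u1 u2 _ h1 _ h2|a u' _ h] v hv.
- elim: hv => [n' v' hm'|v1 v2 _ h1 _ h2|a v' _ h].
  + exact: sp_m (mo_mul hm hm').
  + by rewrite mulDr; apply: sp_add.
  + by rewrite mulZr; apply: sp_sc.
- by rewrite mulDl; apply: sp_add; [apply: h1|apply: h2].
- by rewrite mulZl; apply: sp_sc; apply: h.
Qed.

Lemma gen_spn (Hc : compatible mul conj) x y u :
  gen_star_subalg mul one conj x y u -> spn x y u.
Proof.
elim=> [|||u1 u2 _ h1 _ h2|a u' _ h|u1 u2 _ h1 _ h2|u' _ h].
- exact: sp_m (mo_n x y nuc_one).
- exact: sp_m (mo_x x y).
- exact: sp_m (mo_y x y).
- exact: sp_add.
- exact: sp_sc.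
- exact: spn_mul.
- rewrite conjE -scaleN1r; apply: sp_add; last exact: sp_sc.
  exact: sp_m (mo_n x y (Hc u')).
Qed.

Lemma spn_assoc x y u v w : spn x y u -> spn x y v -> spn x y w -> a3 u v w = 0.
Proof.
move=> hu; elim: hu v w => [i p hp|u1 u2 _ h1 _ h2|a u' _ h] v w hv hw; last first.
- by rewrite a3Zl h // scaler0.
- by rewrite a3Dl h1 // h2 // addr0.
elim: hv w hw => [j q hq|v1 v2 _ h1 _ h2|a v' _ h] w hw; last first.
- by rewrite a3Zm h // scaler0.
- by rewrite a3Dm h1 // h2 // addr0.
elim: hw => [k r hr|w1 w2 _ h1 _ h2|a w' _ h]; last first.
- by rewrite a3Zr h scaler0.
- by rewrite a3Dr h1 h2 addr0.
exact: (mono_assoc hp hq hr (leqnn _)).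
Qed.

End Alt.

Theorem theorem1p10 (R : realType) (V : lmodType R)
    (mul : V -> V -> V) (one : V) (conj : V -> V)
    (HA : is_real_alt_star_alg mul one conj)
    (Hcompat : compatible mul conj) :
  (forall x : V, nucleus mul (nrm mul conj x)) /\
  (forall x y : V, assoc mul x (conj x) y = 0) /\
  (forall x y : V, forall u v w : V,
      gen_star_subalg mul one conj x y u ->
      gen_star_subalg mul one conj x y v ->
      gen_star_subalg mul one conj x y w ->
      assoc mul u v w = 0).
Proof.
split; first by move=> x; exact: (part1 HA Hcompat x).
split; first by move=> x y; exact: (part2 HA Hcompat x y).
move=> x y u v w hu hv hw.
exact: (spn_assoc HA (gen_spn HA Hcompat hu) (gen_spn HA Hcompat hv) (gen_spn HA Hcompat hw)).
Qed.
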